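(* Let $a>0$, $b>0$, $c>0$ and consider the equation $u_t+ax^2u_{xx}+bx^3u_{xx}^2+cxu_x-cu=0$ for $t>0$, $x>0$. Let $c_1,c_2$ be arbitrary real constants and $\varepsilon,\delta\in\{1,-1\}$. Each of the following functions is an exact solution: (1) $u=c_1e^{ct}+\frac{a}{2b}x\left(c_2+\frac{a+2c}{2}t-\log x\right)$; (2) $u=(c_1-ct)e^{ct}+4\delta e^{\frac c2t}\sqrt{\frac{cx}{b}}+\frac{a}{2b}x\left(c_2+\frac{a+2c}{2}t-\log x\right)$; (3) $u=c_1e^{ct}+\frac{a+2\varepsilon c}{2b}x\left(c_2+\frac{a+2(1-\varepsilon)c}{2}t-\log x\right)$; (4) $u=\varepsilon c_1^2e^{(1-\varepsilon)ct}+4\delta c_1e^{\frac c2(1-\varepsilon)t}\sqrt{\frac{cx}{b}}+\frac{a+2\varepsilon c}{2b}x\left(c_2+\frac{a+2(1-\varepsilon)c}{2}t-\log x\right)$; (5) $u=\frac{cx}{b}\left\{c_1+\left[\varepsilon c+\frac a2\left(1+\frac{a}{2c}\right)\right]t-\frac{a}{2c}\log x+\frac{1}{2k}\left(\delta\sqrt{1-4\varepsilon k^2}-1\right)\left[\left(\frac1k-1\right)ct+\log x\right]\right\}$, where $k\neq0$ if $\varepsilon=-1$, and $0<|k|\le\frac12$ if $\varepsilon=1$.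
   Context: $\log$ denotes the natural logarithm. *)

(* Defs.v *)
From Stdlib Require Import Reals.
From Coquelicot Require Import Coquelicot.
Open Scope R_scope.

Definition solves (a b c : R) (u : R -> R -> R) : Prop :=
  forall t x : R, 0 < t -> 0 < x ->
    ex_derive (fun s => u s x) t /\
    (forall y, 0 < y -> ex_derive (fun z => u t z) y) /\
    ex_derive (fun y => Derive (fun z => u t z) y) x /\
    Derive (fun s => u s x) t
      + a * x ^ 2 * Derive (fun y => Derive (fun z => u t z) y) x
      + b * x ^ 3 * (Derive (fun y => Derive (fun z => u t z) y) x) ^ 2
      + c * x * Derive (fun z => u t z) x
      - c * u t x = 0.

(* Main.v *)
Require Import Defs.
From Stdlib Require Import Reals Lra Psatz.
From Coquelicot Require Import Coquelicot.
Open Scope R_scope.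

Lemma loc_pos x : 0 < x -> locally x (fun y => 0 < y).
Proof. intros. apply (open_gt 0). exact H. Qed.

Lemma gen (a b c : R) (p q r dp dq dr : R -> R) (K : R) (u : R -> R -> R) :
  (forall t, is_derive p t (dp t)) ->
  (forall t, is_derive q t (dq t)) ->
  (forall t, is_derive r t (dr t)) ->
  (forall t x, 0 < x -> u t x = p t + q t * sqrt x + x * (r t - K * ln x)) ->
  (forall t x, 0 < t -> 0 < x ->
     dp t + dq t * sqrt x + x * dr t
     + a * x ^ 2 * (- q t / (4 * x * sqrt x) - K / x)
     + b * x ^ 3 * (- q t / (4 * x * sqrt x) - K / x) ^ 2
     + c * x * (q t / (2 * sqrt x) + r t - K * ln x - K)
     - c * (p t + q t * sqrt x + x * (r t - K * ln x)) = 0) ->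
  solves a b c u.
Proof.
  intros Hp Hq Hr Heq Halg t x Ht Hx.
  assert (Dt : is_derive (fun s => u s x) t (dp t + dq t * sqrt x + x * dr t)).
  { apply is_derive_ext with (fun s => p s + q s * sqrt x + x * (r s - K * ln x)).
    { intros s; rewrite Heq; auto. }
    auto_derive.
    - repeat split; eexists; eauto.
    - replace (Derive (fun x0 : R => p x0) t) with (dp t) by (symmetry; apply is_derive_unique; apply Hp).
      replace (Derive (fun x0 : R => q x0) t) with (dq t) by (symmetry; apply is_derive_unique; apply Hq).
      replace (Derive (fun x0 : R => r x0) t) with (dr t) by (symmetry; apply is_derive_unique; apply Hr).
      ring. }
  assert (Dx : forall y, 0 < y -> is_derive (fun z => u t z) y
              (q t / (2 * sqrt y) + r t - K * ln y - K)).
  { intros y Hy.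
    apply is_derive_ext_loc with (fun z => p t + q t * sqrt z + z * (r t - K * ln z)).
    { generalize (loc_pos y Hy). apply filter_imp. intros z Hz. rewrite Heq; auto. }
    assert (0 < sqrt y) by (apply sqrt_lt_R0; auto).
    auto_derive.
    - repeat split; auto.
    - field. split; lra. }
  assert (Dxx : is_derive (fun y => Derive (fun z => u t z) y) x
                  (- q t / (4 * x * sqrt x) - K / x)).
  { apply is_derive_ext_loc with (fun y => q t / (2 * sqrt y) + r t - K * ln y - K).
    { generalize (loc_pos x Hx). apply filter_imp. intros z Hz.
      symmetry. apply is_derive_unique. apply Dx; auto. }
    assert (0 < sqrt x) by (apply sqrt_lt_R0; auto).
    auto_derive.
    - repeat split; auto; lra.
    - assert (Hs : sqrt x * sqrt x = x) by (apply sqrt_sqrt; lra).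
      set (s := sqrt x) in *. rewrite <- Hs. field. lra. }
  split; [eexists; eauto|].
  split; [intros y Hy; eexists; apply Dx; auto|].
  split; [eexists; eauto|].
  assert (E1 : Derive (fun s : R => u s x) t = dp t + dq t * sqrt x + x * dr t)
    by (apply is_derive_unique; exact Dt).
  assert (E2 : Derive (fun y : R => Derive (fun z : R => u t z) y) x = - q t / (4 * x * sqrt x) - K / x)
    by (apply is_derive_unique; exact Dxx).
  assert (E3 : Derive (fun z : R => u t z) x = q t / (2 * sqrt x) + r t - K * ln x - K)
    by (apply is_derive_unique; apply Dx; auto).
  rewrite E1, E2, E3, Heq by auto.
  apply Halg; auto.
Qed.

Ltac sqx x := 
  let Hs0 := fresh in let Hs := fresh in
  assert (Hs0 : 0 < sqrt x) by (apply sqrt_lt_R0; auto);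
  assert (Hs : sqrt x * sqrt x = x) by (apply sqrt_sqrt; lra);
  set (s := sqrt x) in *; clearbody s; rewrite <- Hs.

Lemma sqrt_cxb (b c x : R) : 0 < b -> 0 < c -> sqrt (c * x / b) = sqrt (c / b) * sqrt x.
Proof.
  intros. replace (c * x / b) with (c / b * x) by (field; lra).
  apply sqrt_mult_alt. apply Rlt_le, Rdiv_lt_0_compat; auto.
Qed.

Theorem mainTheorem6 (a b c : R) (ha : 0 < a) (hb : 0 < b) (hc : 0 < c) :
  forall (c1 c2 eps delta : R),
    (eps = 1 \/ eps = -1) -> (delta = 1 \/ delta = -1) ->
    (* (1) *)
    solves a b c (fun t x =>
      c1 * exp (c * t) + a / (2 * b) * x * (c2 + (a + 2 * c) / 2 * t - ln x)) /\
    (* (2) *)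
    solves a b c (fun t x =>
      (c1 - c * t) * exp (c * t) + 4 * delta * exp (c / 2 * t) * sqrt (c * x / b)
      + a / (2 * b) * x * (c2 + (a + 2 * c) / 2 * t - ln x)) /\
    (* (3) *)
    solves a b c (fun t x =>
      c1 * exp (c * t)
      + (a + 2 * eps * c) / (2 * b) * x
          * (c2 + (a + 2 * (1 - eps) * c) / 2 * t - ln x)) /\
    (* (4) *)
    solves a b c (fun t x =>
      eps * c1 ^ 2 * exp ((1 - eps) * c * t)
      + 4 * delta * c1 * exp (c / 2 * (1 - eps) * t) * sqrt (c * x / b)
      + (a + 2 * eps * c) / (2 * b) * x
          * (c2 + (a + 2 * (1 - eps) * c) / 2 * t - ln x)) /\
    (* (5) *)
    (forall k : R,
       (eps = -1 -> k <> 0) -> (eps = 1 -> 0 < Rabs k <= 1 / 2) ->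
       solves a b c (fun t x =>
         c * x / b *
           (c1 + (eps * c + a / 2 * (1 + a / (2 * c))) * t
            - a / (2 * c) * ln x
            + 1 / (2 * k) * (delta * sqrt (1 - 4 * eps * k ^ 2) - 1)
                * ((1 / k - 1) * c * t + ln x)))).
Proof.
  intros c1 c2 eps delta Heps Hdelta.
  assert (HS : sqrt (c / b) * sqrt (c / b) = c / b)
    by (apply sqrt_sqrt; apply Rlt_le, Rdiv_lt_0_compat; auto).
  split; [|split; [|split; [|split]]].
  -
    apply (gen a b c (fun t => c1 * exp (c * t)) (fun _ => 0)
             (fun t => a / (2 * b) * (c2 + (a + 2 * c) / 2 * t))
             (fun t => c1 * (c * exp (c * t))) (fun _ => 0)
             (fun t => a / (2 * b) * ((a + 2 * c) / 2)) (a / (2 * b))).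
    + intros t; auto_derive; auto; ring.
    + intros t; auto_derive; auto; ring.
    + intros t; auto_derive; auto; ring.
    + intros t x Hx; ring.
    + intros t x Ht Hx. sqx x. field. lra.
  -
    apply (gen a b c (fun t => (c1 - c * t) * exp (c * t))
             (fun t => 4 * delta * sqrt (c / b) * exp (c / 2 * t))
             (fun t => a / (2 * b) * (c2 + (a + 2 * c) / 2 * t))
             (fun t => - c * exp (c * t) + (c1 - c * t) * (c * exp (c * t)))
             (fun t => 4 * delta * sqrt (c / b) * (c / 2 * exp (c / 2 * t)))
             (fun t => a / (2 * b) * ((a + 2 * c) / 2)) (a / (2 * b))).
    + intros t; auto_derive; auto; ring.
    + intros t; auto_derive; auto; ring.
    + intros t; auto_derive; auto; ring.
    + intros t x Hx; rewrite sqrt_cxb by auto; ring.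
    + intros t x Ht Hx. sqx x.
      assert (HE : exp (c * t) = exp (c / 2 * t) * exp (c / 2 * t))
        by (rewrite <- exp_plus; f_equal; field).
      rewrite HE. set (E := exp (c / 2 * t)). clearbody E.
      set (S := sqrt (c / b)) in *. clearbody S.
      assert (Hc : c = S * S * b) by (rewrite HS; field; lra).
      rewrite Hc.
      destruct Hdelta; subst delta; field; lra.
  -
    apply (gen a b c (fun t => c1 * exp (c * t)) (fun _ => 0)
             (fun t => (a + 2 * eps * c) / (2 * b) * (c2 + (a + 2 * (1 - eps) * c) / 2 * t))
             (fun t => c1 * (c * exp (c * t))) (fun _ => 0)
             (fun t => (a + 2 * eps * c) / (2 * b) * ((a + 2 * (1 - eps) * c) / 2))
             ((a + 2 * eps * c) / (2 * b))).
    + intros t; auto_derive; auto; ring.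
    + intros t; auto_derive; auto; ring.
    + intros t; auto_derive; auto; ring.
    + intros t x Hx; ring.
    + intros t x Ht Hx. sqx x. field. lra.
  -
    apply (gen a b c (fun t => eps * c1 ^ 2 * exp ((1 - eps) * c * t))
             (fun t => 4 * delta * c1 * sqrt (c / b) * exp (c / 2 * (1 - eps) * t))
             (fun t => (a + 2 * eps * c) / (2 * b) * (c2 + (a + 2 * (1 - eps) * c) / 2 * t))
             (fun t => eps * c1 ^ 2 * ((1 - eps) * c * exp ((1 - eps) * c * t)))
             (fun t => 4 * delta * c1 * sqrt (c / b) * (c / 2 * (1 - eps) * exp (c / 2 * (1 - eps) * t)))
             (fun t => (a + 2 * eps * c) / (2 * b) * ((a + 2 * (1 - eps) * c) / 2))
             ((a + 2 * eps * c) / (2 * b))).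
    + intros t; auto_derive; auto; ring.
    + intros t; auto_derive; auto; ring.
    + intros t; auto_derive; auto; ring.
    + intros t x Hx; rewrite sqrt_cxb by auto; ring.
    + intros t x Ht Hx. sqx x.
      assert (HE : exp ((1 - eps) * c * t) = exp (c / 2 * (1 - eps) * t) * exp (c / 2 * (1 - eps) * t))
        by (rewrite <- exp_plus; f_equal; field).
      rewrite HE. set (E := exp (c / 2 * (1 - eps) * t)). clearbody E.
      set (S := sqrt (c / b)) in *. clearbody S.
      assert (Hc : c = S * S * b) by (rewrite HS; field; lra).
      rewrite Hc.
      destruct Hdelta; subst delta; destruct Heps; subst eps; field; lra.
  -
    intros k Hk1 Hk2.
    assert (Hk : k <> 0).
    { destruct Heps as [He|He]; [|auto].
      destruct (Hk2 He) as [H0 _]. intro Hk0; rewrite Hk0, Rabs_R0 in H0; lra. }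
    assert (Hnn : 0 <= 1 - 4 * eps * k ^ 2).
    { destruct Heps as [He|He]; subst eps; [|nra].
      destruct (Hk2 eq_refl) as [_ H1].
      unfold Rabs in H1; destruct (Rcase_abs k); nra. }
    set (mu := 1 / (2 * k) * (delta * sqrt (1 - 4 * eps * k ^ 2) - 1)).
    assert (Hmu : eps = - (mu * mu + mu / k)).
    { unfold mu. assert (HT := sqrt_sqrt _ Hnn).
      set (T := sqrt (1 - 4 * eps * k ^ 2)) in *. clearbody T.
      destruct Hdelta; subst delta; field_simplify; auto; replace (T ^ 2) with (1 - 4 * eps * k ^ 2) by (rewrite <- HT; ring); field; auto. }
    clearbody mu.
    apply (gen a b c (fun _ => 0) (fun _ => 0)
             (fun t => c / b * (c1 + (eps * c + a / 2 * (1 + a / (2 * c))) * t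
                          + mu * ((1 / k - 1) * c * t)))
             (fun _ => 0) (fun _ => 0)
             (fun t => c / b * ((eps * c + a / 2 * (1 + a / (2 * c))) + mu * ((1 / k - 1) * c)))
             (c / b * (a / (2 * c) - mu))).
    + intros t; auto_derive; auto; ring.
    + intros t; auto_derive; auto; ring.
    + intros t; auto_derive; auto; ring.
    + intros t x Hx; field. lra.
    + intros t x Ht Hx. sqx x. rewrite Hmu. field. lra.
Qed.
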